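(* Let $a,b\ge 0$ and $0\le v\le 1$. Let $g:[0,1]\to\mathbb{R}$ be non-decreasing on $[0,1]$ with $g(1)\neq g(0)$. Then \[ a\sharp_v b+\frac{4}{g(1)-g(0)}\int_{0}^{1}\left(F_{t,v}(a,b)-F_{1/2,v}(a,b)\right)g(t)\,dt\le a\nabla_v b. \] In particular, \[ a\sharp b+\frac{4}{g(1)-g(0)}\left[\int_{0}^{1}g(t)F_{t,1/2}(a,b)\,dt-F_{1/2,1/2}(a,b)\int_{0}^{1}g(t)\,dt\right]\le a\nabla b. \]
   Context: For $a,b\ge 0$ and $0\le v\le 1$: $a\sharp_v b:=a^{1-v}b^{v}$ (weighted geometric mean) and $a\nabla_v b:=(1-v)a+vb$ (weighted arithmetic mean); $a\sharp b:=a\sharp_{1/2}b=\sqrt{ab}$ and $a\nabla b:=a\nabla_{1/2}b=\frac{a+b}{2}$. The Heron mean is $F_{t,v}(a,b):=(1-t)(a\sharp_v b)+t(a\nabla_v b)$ for $0\le t,v\le 1$. *)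

(* Defs.v *)
From Stdlib Require Import Reals.
From Coquelicot Require Import Coquelicot.
Open Scope R_scope.

(* Real power x^y for x >= 0, with the conventions 0^0 = 1 and 0^y = 0 for y <> 0
   (Stdlib's Rpower gives Rpower 0 y = 1, which is wrong for y > 0). *)
Definition rpow (x y : R) : R :=
  if Rle_dec x 0 then (if Req_EM_T y 0 then 1 else 0) else Rpower x y.

Definition gmean (v a b : R) : R := rpow a (1 - v) * rpow b v.

Definition amean (v a b : R) : R := (1 - v) * a + v * b.

(* Heron mean F_{t,v}(a,b) = (1-t)(a #_v b) + t (a nabla_v b) *)
Definition heron (t v a b : R) : R := (1 - t) * gmean v a b + t * amean v a b.

(* Main.v *)
Require Import Defs.
From Stdlib Require Import Reals Lra Lia Psatz ZArith.
From Coquelicot Require Import Coquelicot.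
Open Scope R_scope.

Lemma step_const (F : R -> R) u v c : u <= v -> (forall x, u < x < v -> F x = c) -> IsStepFun F u v.
Proof.
  intros Huv H. exists (cons u (cons v nil)). exists (cons c nil).
  unfold adapted_couple. repeat split.
  - intros i Hi. simpl in Hi. assert (i = 0%nat) by lia. subst. simpl. exact Huv.
  - simpl. rewrite Rmin_left; auto.
  - simpl. rewrite Rmax_right; auto.
  - intros i Hi. simpl in Hi. assert (i = 0%nat) by lia. subst. simpl.
    intros x Hx. unfold open_interval in Hx. apply H; exact Hx.
Qed.

Lemma int_const (F : R -> R) u v c (pr : IsStepFun F u v) : u <= v ->
  (forall x, u < x < v -> F x = c) -> RiemannInt_SF (mkStepFun pr) = c * (v - u).
Proof.
  intros Huv H. rewrite <- (StepFun_P18 u v c).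
  apply Rle_antisym; apply StepFun_P37; auto; intros x Hx; simpl; unfold fct_cte;
  rewrite H; auto; lra.
Qed.

Lemma floor_nat (k : nat) x : INR k < x < INR k + 1 -> IZR (floor x) = INR k.
Proof.
  intros Hx. destruct (floor_ex x) as [z Hz] eqn:E. unfold floor. rewrite E. simpl.
  rewrite INR_IZR_INZ in *.
  assert (z < Z.of_nat k + 1)%Z. { apply lt_IZR. rewrite plus_IZR. simpl. lra. }
  assert (Z.of_nat k < z + 1)%Z. { apply lt_IZR. rewrite plus_IZR. simpl. lra. }
  f_equal. lia.
Qed.

Section Steps.
Variable F : R -> R.
Variable n : nat.
Variable c : nat -> R.
Hypothesis Hn : (0 < n)%nat.
Hypothesis Hc : forall k x, (k < n)%nat -> INR k / INR n < x < (INR k + 1) / INR n -> F x = c k.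

Lemma INRn_pos : 0 < INR n.
Proof. apply lt_0_INR; exact Hn. Qed.

Lemma step_pieces : forall k, (k <= n)%nat -> forall v, v = INR k / INR n -> IsStepFun F 0 v.
Proof.
  pose proof INRn_pos.
  induction k as [|k IH]; intros Hk v Hv.
  - subst v. simpl. apply step_const with (c := 0). unfold Rdiv. lra.
    intros x Hx. unfold Rdiv in Hx. lra.
  - apply StepFun_P46 with (b := INR k / INR n).
    + apply IH; auto; lia.
    + subst v. apply step_const with (c := c k).
      * rewrite S_INR. apply Rmult_le_compat_r. left; apply Rinv_0_lt_compat; auto. lra.
      * intros x Hx. apply Hc. lia. rewrite <- S_INR. exact Hx.
Qed.

Variable Sm : nat -> R.
Hypothesis HS0 : Sm 0%nat = 0.
Hypothesis HS : forall k, (k < n)%nat -> Sm (Datatypes.S k) = Sm k + c k / INR n.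

Lemma int_pieces : forall k, (k <= n)%nat -> forall v, v = INR k / INR n ->
  forall pr : IsStepFun F 0 v, RiemannInt_SF (mkStepFun pr) = Sm k.
Proof.
  pose proof INRn_pos.
  induction k as [|k IH]; intros Hk v Hv pr.
  - subst v. rewrite HS0. rewrite (int_const F 0 _ 0). ring. simpl; unfold Rdiv; lra.
    intros x Hx. simpl in Hx. unfold Rdiv in Hx. lra.
  - assert (Hk' : (k <= n)%nat) by lia.
    pose (v1 := INR k / INR n).
    assert (pr1 : IsStepFun F 0 v1) by (apply step_pieces with k; auto).
    assert (Hle : v1 <= v). { subst v v1. rewrite S_INR. apply Rmult_le_compat_r. left; apply Rinv_0_lt_compat; auto. lra. }
    assert (pr2 : IsStepFun F v1 v).
    { apply step_const with (c := c k). auto. intros x Hx. apply Hc. lia. subst v v1. rewrite <- S_INR. exact Hx. }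
    rewrite <- (StepFun_P43 pr1 pr2 pr).
    rewrite (IH Hk' v1 eq_refl pr1).
    rewrite (int_const F v1 v (c k) pr2 Hle).
    rewrite HS by lia. subst v v1. rewrite S_INR. field. lra.
    intros x Hx. apply Hc. lia. subst v v1. rewrite <- S_INR. exact Hx.
Qed.
End Steps.

Lemma floor_spec x : IZR (floor x) <= x < IZR (floor x) + 1.
Proof. unfold floor. destruct (floor_ex x) as [z Hz]. simpl. exact Hz. Qed.

Lemma mono_RI (f : R -> R) (hf : forall x y, 0<=x -> x<=y -> y<=1 -> f x <= f y) :
  Riemann_integrable f 0 1.
Proof.
  intro eps.
  assert (H01 : f 0 <= f 1) by (apply hf; lra).
  pose (n := Datatypes.S (Z.to_nat (up ((f 1 - f 0) / eps)))).
  assert (Hn : (0 < n)%nat) by (unfold n; lia).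
  assert (HnR : 0 < INR n) by (apply lt_0_INR; auto).
  assert (Hbig : (f 1 - f 0) / eps < INR n).
  { unfold n. rewrite S_INR. destruct (archimed ((f 1 - f 0) / eps)) as [H1 _].
    destruct (Z.lt_ge_cases (up ((f 1 - f 0) / eps)) 0) as [Hz|Hz].
    - apply IZR_lt in Hz. pose proof (pos_INR (Z.to_nat (up ((f 1 - f 0) / eps)))). lra.
    - rewrite INR_IZR_INZ. rewrite Z2Nat.id by lia. lra. }
  pose (phi := fun t => f (IZR (floor (INR n * t)) / INR n)).
  pose (psi := fun t => f (Rmin 1 ((IZR (floor (INR n * t)) + 1) / INR n)) - f (IZR (floor (INR n * t)) / INR n)).
  assert (Hpiece : forall k x, (k < n)%nat -> INR k / INR n < x < (INR k + 1) / INR n ->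
            IZR (floor (INR n * x)) = INR k).
  { intros k x Hk Hx. apply floor_nat. destruct Hx as [Hx1 Hx2].
    apply Rmult_lt_compat_l with (r := INR n) in Hx1; auto.
    apply Rmult_lt_compat_l with (r := INR n) in Hx2; auto.
    replace (INR n * (INR k / INR n)) with (INR k) in Hx1 by (field; lra).
    replace (INR n * ((INR k + 1) / INR n)) with (INR k + 1) in Hx2 by (field; lra).
    lra. }
  assert (Hkn : forall k, (k < n)%nat -> (INR k + 1) / INR n <= 1).
  { intros k Hk. assert (Hk2 : INR (Datatypes.S k) <= INR n) by (apply le_INR; lia). rewrite S_INR in Hk2.
    apply Rmult_le_reg_r with (INR n); auto. field_simplify; lra. }
  assert (Hphi : forall k x, (k < n)%nat -> INR k / INR n < x < (INR k + 1) / INR n ->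
            phi x = f (INR k / INR n)).
  { intros k x Hk Hx. unfold phi. rewrite (Hpiece k x Hk Hx). reflexivity. }
  assert (Hpsi : forall k x, (k < n)%nat -> INR k / INR n < x < (INR k + 1) / INR n ->
            psi x = f ((INR k + 1) / INR n) - f (INR k / INR n)).
  { intros k x Hk Hx. unfold psi. rewrite (Hpiece k x Hk Hx).
    rewrite Rmin_right by (apply Hkn; auto). reflexivity. }
  assert (Hnn : INR n / INR n = 1) by (field; lra).
  assert (prphi : IsStepFun phi 0 1).
  { apply (step_pieces phi n _ Hn Hphi n (Nat.le_refl n)). auto. }
  assert (prpsi : IsStepFun psi 0 1).
  { apply (step_pieces psi n _ Hn Hpsi n (Nat.le_refl n)). auto. }
  exists (mkStepFun prphi). exists (mkStepFun prpsi). split.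
  - intros t Ht. rewrite Rmin_left in Ht by lra. rewrite Rmax_right in Ht by lra.
    simpl. unfold phi, psi.
    pose proof (floor_spec (INR n * t)) as Hf.
    set (r := IZR (floor (INR n * t))) in *.
    destruct (Req_dec t 1) as [Ht1|Ht1].
    + subst t. rewrite Rmult_1_r in Hf.
      assert (Hr : r = INR n).
      { unfold r. rewrite Rmult_1_r. rewrite INR_IZR_INZ.
        f_equal. pose proof (floor_spec (INR n)) as Hf2. rewrite INR_IZR_INZ in Hf2.
        destruct Hf2 as [Ha Hb].
        assert (floor (IZR (Z.of_nat n)) <= Z.of_nat n)%Z by (apply le_IZR; lra).
        assert (Z.of_nat n < floor (IZR (Z.of_nat n)) + 1)%Z by (apply lt_IZR; rewrite plus_IZR; lra).
        lia. }
      rewrite Hr. rewrite Hnn. rewrite Rmin_left.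
      rewrite Rminus_diag, Rabs_R0. lra.
      apply Rmult_le_reg_r with (INR n); auto. field_simplify; lra.
    + assert (Hz : (0 <= floor (INR n * t))%Z).
      { apply Z.lt_succ_r. apply lt_IZR. rewrite succ_IZR. fold r. simpl.
        assert (0 <= INR n * t) by nra. lra. }
      assert (Hzn : (floor (INR n * t) < Z.of_nat n)%Z).
      { apply lt_IZR. fold r. rewrite <- INR_IZR_INZ. nra. }
      assert (Hr1 : r + 1 <= INR n).
      { assert (Hs : (Z.succ (floor (INR n * t)) <= Z.of_nat n)%Z) by lia.
        apply IZR_le in Hs. rewrite succ_IZR in Hs. rewrite <- INR_IZR_INZ in Hs. exact Hs. }
      assert (Hr0 : 0 <= r) by (unfold r; apply IZR_le; lia).
      assert (Hx0 : r / INR n <= t).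
      { apply Rmult_le_reg_r with (INR n); auto. field_simplify; lra. }
      assert (Hx1 : t <= (r + 1) / INR n).
      { apply Rmult_le_reg_r with (INR n); auto. field_simplify; lra. }
      assert (Hx2 : (r + 1) / INR n <= 1).
      { apply Rmult_le_reg_r with (INR n); auto. field_simplify; lra. }
      assert (0 <= r / INR n) by (apply Rdiv_le_0_compat; lra).
      rewrite Rmin_right by lra.
      pose proof (hf _ _ H Hx0 (proj2 Ht)). pose proof (hf _ _ (proj1 Ht) Hx1 Hx2).
      rewrite Rabs_right by lra. lra.
  - pose (Sm := fun k => (f (INR k / INR n) - f 0) / INR n).
    assert (HS0 : Sm 0%nat = 0). { unfold Sm. simpl. unfold Rdiv. rewrite Rmult_0_l. ring. }
    assert (HS : forall k, (k < n)%nat -> Sm (Datatypes.S k) = Sm k + (f ((INR k + 1) / INR n) - f (INR k / INR n)) / INR n).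
    { intros k Hk. unfold Sm. rewrite S_INR. field. lra. }
    rewrite (int_pieces psi n _ Hn Hpsi Sm HS0 HS n (Nat.le_refl n) 1 (eq_sym Hnn) prpsi).
    unfold Sm. rewrite Hnn. rewrite Rabs_right.
    apply Rmult_lt_reg_r with (INR n); auto. field_simplify; try lra.
    pose proof (cond_pos eps).
    apply Rmult_lt_compat_r with (r := pos eps) in Hbig; auto.
    unfold Rdiv in Hbig. rewrite Rmult_assoc, Rinv_l, Rmult_1_r in Hbig; lra.
    apply Rle_ge, Rdiv_le_0_compat; lra.
Qed.

Lemma mono_ex (f : R -> R) (hf : forall x y, 0<=x -> x<=y -> y<=1 -> f x <= f y) :
  ex_RInt f 0 1.
Proof. apply ex_RInt_Reals_1. apply mono_RI. exact hf. Qed.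

Lemma amgm a b v : 0 <= a -> 0 <= b -> 0 <= v <= 1 -> gmean v a b <= amean v a b.
Proof.
  intros ha hb hv. unfold gmean, amean, rpow.
  destruct (Rle_dec a 0) as [Ha|Ha]; destruct (Rle_dec b 0) as [Hb|Hb].
  - assert (a = 0) by lra. assert (b = 0) by lra. subst.
    destruct (Req_EM_T (1 - v) 0); destruct (Req_EM_T v 0); lra.
  - assert (a = 0) by lra. subst.
    destruct (Req_EM_T (1 - v) 0) as [E|E].
    + assert (v = 1) by lra. subst. rewrite Rpower_1 by lra. lra.
    + nra.
  - assert (b = 0) by lra. subst.
    destruct (Req_EM_T v 0) as [E|E].
    + subst. replace (1 - 0) with 1 by ring. rewrite Rpower_1 by lra. lra.
    + rewrite Rmult_0_r. nra.
  - apply Rnot_le_lt in Ha. apply Rnot_le_lt in Hb.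
    unfold Rpower. rewrite <- exp_plus.
    set (x := ln a). set (y := ln b).
    set (m := (1 - v) * x + v * y).
    replace ((1 - v) * ln a + v * ln b) with m by (unfold m, x, y; ring).
    assert (Ea : exp x = a) by (apply exp_ln; lra).
    assert (Eb : exp y = b) by (apply exp_ln; lra).
    rewrite <- Ea, <- Eb.
    replace (exp x) with (exp m * exp (x - m)) by (rewrite <- exp_plus; f_equal; ring).
    replace (exp y) with (exp m * exp (y - m)) by (rewrite <- exp_plus; f_equal; ring).
    pose proof (exp_ineq1_le (x - m)). pose proof (exp_ineq1_le (y - m)).
    pose proof (exp_pos m).
    assert (exp m * ((1 - v) * (1 + (x - m)) + v * (1 + (y - m))) = exp m) by (unfold m; ring).
    assert (exp m * (1 + (x - m)) <= exp m * exp (x - m)) by (apply Rmult_le_compat_l; lra).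
    assert (exp m * (1 + (y - m)) <= exp m * exp (y - m)) by (apply Rmult_le_compat_l; lra).
    assert ((1 - v) * (exp m * (1 + (x - m))) <= (1 - v) * (exp m * exp (x - m))) by (apply Rmult_le_compat_l; lra).
    assert (v * (exp m * (1 + (y - m))) <= v * (exp m * exp (y - m))) by (apply Rmult_le_compat_l; lra).
    nra.
Qed.

Section G.
Variable g : R -> R.
Hypothesis hg : forall x y, 0 <= x -> x <= y -> y <= 1 -> g x <= g y.

Lemma ex_h : ex_RInt (fun t => (t - 1/2) * g t) 0 1.
Proof.
  assert (E1 : ex_RInt (fun t => t * (g t - g 0)) 0 1).
  { apply mono_ex. intros x y Hx Hxy Hy.
    pose proof (hg 0 x ltac:(lra) Hx ltac:(lra)). pose proof (hg x y Hx Hxy Hy). nra. }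
  assert (E2 : ex_RInt g 0 1) by (apply mono_ex; exact hg).
  assert (E3 : ex_RInt (fun t => t) 0 1).
  { apply (@ex_RInt_continuous R_CompleteNormedModule). intros; apply continuous_id. }
  apply (ex_RInt_ext (fun t => plus (plus (t * (g t - g 0)) (scal (g 0) t)) (scal (-(1/2)) (g t)))).
  - intros x _. unfold plus, scal; simpl. unfold mult; simpl. match goal with |- ?a = ?b => change (@eq R a b) end; ring.
  - apply (@ex_RInt_plus R_NormedModule). apply (@ex_RInt_plus R_NormedModule). exact E1.
    apply (@ex_RInt_scal R_NormedModule). exact E3.
    apply (@ex_RInt_scal R_NormedModule). exact E2.
Qed.

Lemma bound_h : RInt (fun t => (t - 1/2) * g t) 0 1 <= (g 1 - g 0) / 4.
Proof.
  set (c0 := g 0). set (c1 := g 1).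
  assert (H01 : c0 <= c1) by (apply hg; lra).
  set (k := fun t => (t - 1/2) * (c0 + c1) / 2 + (c1 - c0) / 2 * ((t - 1/2)^2 + 1/4)).
  set (K := fun t => (c0 + c1) / 2 * (t^2/2 - t/2) + (c1 - c0) / 2 * ((t - 1/2)^3/3 + t/4)).
  assert (HK : is_RInt k 0 1 (minus (K 1) (K 0))).
  { apply (@is_RInt_derive R_CompleteNormedModule).
    - intros x _. unfold K, k. auto_derive; auto. field.
    - intros x _. unfold k. apply (@ex_derive_continuous R_AbsRing R_NormedModule). auto_derive. auto. }
  apply Rle_trans with (RInt k 0 1).
  - apply RInt_le. lra. apply ex_h. eexists; exact HK.
    intros x Hx. unfold k. destruct (Rle_dec (1/2) x).
    + pose proof (hg x 1 ltac:(lra) ltac:(lra) ltac:(lra)). fold c1 in H.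
      assert ((x - 1/2) * g x <= (x - 1/2) * c1) by nra.
      assert (E : (x - 1 / 2) * (c0 + c1) / 2 + (c1 - c0) / 2 * ((x - 1 / 2) ^ 2 + 1 / 4) - (x - 1/2) * c1 = (c1 - c0) / 2 * (x - 1) ^ 2) by field.
      assert (0 <= (c1 - c0) / 2 * (x - 1) ^ 2) by (apply Rmult_le_pos; [lra | apply pow2_ge_0]). lra.
    + pose proof (hg 0 x ltac:(lra) ltac:(lra) ltac:(lra)). fold c0 in H.
      assert ((x - 1/2) * g x <= (x - 1/2) * c0) by nra.
      assert (E : (x - 1 / 2) * (c0 + c1) / 2 + (c1 - c0) / 2 * ((x - 1 / 2) ^ 2 + 1 / 4) - (x - 1/2) * c0 = (c1 - c0) / 2 * x ^ 2) by field.
      assert (0 <= (c1 - c0) / 2 * x ^ 2) by (apply Rmult_le_pos; [lra | apply pow2_ge_0]). lra.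
  - rewrite (is_RInt_unique _ _ _ _ HK). unfold minus, plus, opp; simpl. unfold K. lra.
Qed.
End G.

Lemma heron_diff t s v a b : heron t v a b - heron s v a b = (t - s) * (amean v a b - gmean v a b).
Proof. unfold heron. ring. Qed.

Lemma fin G A c I : G <= A -> 0 < c -> I <= c / 4 -> G + 4 / c * ((A - G) * I) <= A.
Proof.
  intros H1 H2 H3.
  assert ((A - G) * I <= (A - G) * (c / 4)) by (apply Rmult_le_compat_l; lra).
  assert (0 <= 4 / c) by (apply Rdiv_le_0_compat; lra).
  assert (4 / c * ((A - G) * I) <= 4 / c * ((A - G) * (c / 4))) by (apply Rmult_le_compat_l; lra).
  replace (4 / c * ((A - G) * (c / 4))) with (A - G) in H4 by (field; lra). lra.
Qed.

Theorem theorem2p1 (a b v : R) (g : R -> R)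
  (ha : 0 <= a) (hb : 0 <= b) (hv0 : 0 <= v) (hv1 : v <= 1)
  (hg : forall x y, 0 <= x -> x <= y -> y <= 1 -> g x <= g y)
  (hg10 : g 1 <> g 0) :
  gmean v a b + 4 / (g 1 - g 0) *
      RInt (fun t => (heron t v a b - heron (1/2) v a b) * g t) 0 1
    <= amean v a b
  /\
  gmean (1/2) a b + 4 / (g 1 - g 0) *
      (RInt (fun t => g t * heron t (1/2) a b) 0 1
       - heron (1/2) (1/2) a b * RInt g 0 1)
    <= amean (1/2) a b.
Proof.
  assert (Hc : 0 < g 1 - g 0). { pose proof (hg 0 1 ltac:(lra) ltac:(lra) ltac:(lra)). lra. }
  pose proof (ex_h g hg) as Eh. pose proof (bound_h g hg) as Bh.
  assert (Eg : ex_RInt g 0 1) by (apply mono_ex; exact hg).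
  split.
  - rewrite (RInt_ext _ (fun t => scal (amean v a b - gmean v a b) ((t - 1/2) * g t))).
    + rewrite (RInt_scal (V := R_CompleteNormedModule)) by exact Eh.
      unfold scal; simpl; unfold mult; simpl.
      apply fin; auto. apply amgm; auto.
    + intros x _. rewrite heron_diff. unfold scal; simpl; unfold mult; simpl. ring.
  - rewrite (RInt_ext _ (fun t => plus (scal (heron (1/2) (1/2) a b) (g t))
                                      (scal (amean (1/2) a b - gmean (1/2) a b) ((t - 1/2) * g t)))).
    + rewrite (RInt_plus (V := R_CompleteNormedModule)).
      2: apply (@ex_RInt_scal R_NormedModule); exact Eg.
      2: apply (@ex_RInt_scal R_NormedModule); exact Eh.
      rewrite (RInt_scal (V := R_CompleteNormedModule)) by exact Eg.
      rewrite (RInt_scal (V := R_CompleteNormedModule)) by exact Eh.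
      unfold plus, scal; simpl; unfold mult; simpl.
      replace (heron (1 / 2) (1 / 2) a b * RInt g 0 1 +
        (amean (1 / 2) a b - gmean (1 / 2) a b) * RInt (fun t : R => (t - 1 / 2) * g t) 0 1 -
        heron (1 / 2) (1 / 2) a b * RInt g 0 1)
        with ((amean (1 / 2) a b - gmean (1 / 2) a b) * RInt (fun t : R => (t - 1 / 2) * g t) 0 1) by ring.
      apply fin; auto. apply amgm; auto; lra.
    + intros x _. unfold plus, scal; simpl; unfold mult; simpl.
      pose proof (heron_diff x (1/2) (1/2) a b).
      replace (heron x (1/2) a b) with (heron (1/2) (1/2) a b + (x - 1/2) * (amean (1 / 2) a b - gmean (1 / 2) a b)) by lra.
      ring.
Qed.
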